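(* Let $E=\{e_1,\ldots,e_m\}$ be finite, $X_1,\ldots,X_n$ fuzzy subsets of $E$, and $\Phi_1,\ldots,\Phi_K$ Boolean combinations, $\Phi_j(Y_1,\ldots,Y_n)=Y_1^{(l_{j,1})}\cap\cdots\cap Y_n^{(l_{j,n})}$. Define the probability function on $\{0,\ldots,m\}^K$ $$f(i_1,\ldots,i_K)=\sum_{\substack{Y_1,\ldots,Y_n\in\mathcal{P}(E):\\ |\Phi_1(Y_1,\ldots,Y_n)|=i_1,\ldots,|\Phi_K(Y_1,\ldots,Y_n)|=i_K}} m_{X_1}(Y_1)\cdots m_{X_n}(Y_n).$$ Then for each $j\in\{1,\ldots,K\}$, the $j$-th marginal (projection) of $f$ is a Poisson binomial distribution with parameters $p^j_s=\mu_{X_1^{(l_{j,1})}\tilde\cap\cdots\tilde\cap X_n^{(l_{j,n})}}(e_s)$, $s=1,\ldots,m$, i.e. $p^j_s=\prod_{r=1}^n \mu_{X_r^{(l_{j,r})}}(e_s)$.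
   Context: For a fuzzy set $X$ on $E$ with membership $\mu_X:E\to[0,1]$ and crisp $Y\subseteq E$, $m_X(Y)=\prod_{e\in Y}\mu_X(e)\prod_{e\in E\setminus Y}(1-\mu_X(e))$. For crisp sets $Y^{(1)}=Y$, $Y^{(0)}=E\setminus Y$; for fuzzy sets $X^{(1)}=X$, $X^{(0)}=\tilde\neg X$ with $\mu_{\tilde\neg X}(e)=1-\mu_X(e)$, and $\tilde\cap$ is the pointwise product t-norm. The Poisson binomial distribution with parameters $p_1,\ldots,p_m$ is the distribution of the number of successes in $m$ independent Bernoulli trials with success probabilities $p_1,\ldots,p_m$: $\Pr(K=k)=\sum_{A\subseteq\{1,\ldots,m\},|A|=k}\prod_{i\in A}p_i\prod_{i\notin A}(1-p_i)$. *)

(* Defs.v *)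
From mathcomp Require Import all_boot all_order all_algebra.
Set Implicit Arguments. Unset Strict Implicit. Unset Printing Implicit Defensive.
Import Order.TTheory GRing.Theory Num.Theory.
Local Open Scope ring_scope.

Section Fuzzy.
Variables (R : realFieldType) (E : finType).

Definition fuzzy := E -> R.

Definition is_fuzzy (X : fuzzy) := forall e, 0 <= X e <= 1.

Definition mX (X : fuzzy) (Y : {set E}) : R :=
  \prod_(e in Y) X e * \prod_(e in ~: Y) (1 - X e).

Definition cpow (Y : {set E}) (b : bool) : {set E} := if b then Y else ~: Y.

Definition fneg (X : fuzzy) : fuzzy := fun e => 1 - X e.
Definition fpow (X : fuzzy) (b : bool) : fuzzy := if b then X else fneg X.

Definition fcap (X Y : fuzzy) : fuzzy := fun e => X e * Y e.
Definition fone : fuzzy := fun _ => 1.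

Definition Phi (n : nat) (l : 'I_n -> bool) (Y : 'I_n -> {set E}) : {set E} :=
  \bigcap_(r < n) cpow (Y r) (l r).

Definition fPhi (n : nat) (l : 'I_n -> bool) (X : 'I_n -> fuzzy) : fuzzy :=
  foldr fcap fone [seq fpow (X r) (l r) | r <- enum 'I_n].

Definition fjoint (n K : nat) (X : 'I_n -> fuzzy) (l : 'I_K -> 'I_n -> bool)
    (i : {ffun 'I_K -> 'I_#|E|.+1}) : R :=
  \sum_(Y : {ffun 'I_n -> {set E}} | [forall j, #|Phi (l j) Y| == val (i j)])
     \prod_(r < n) mX (X r) (Y r).

Definition marginal (n K : nat) (X : 'I_n -> fuzzy) (l : 'I_K -> 'I_n -> bool)
    (j : 'I_K) (k : 'I_#|E|.+1) : R :=
  \sum_(i : {ffun 'I_K -> 'I_#|E|.+1} | i j == k) fjoint X l i.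

Definition poisson_binomial (p : E -> R) (k : nat) : R :=
  \sum_(A : {set E} | #|A| == k) (\prod_(e in A) p e * \prod_(e in ~: A) (1 - p e)).

End Fuzzy.

(* Main.v *)
Require Import Defs.
From mathcomp Require Import all_boot all_order all_algebra.
Import Order.TTheory GRing.Theory Num.Theory.
Local Open Scope ring_scope.

Lemma mXE (R : realFieldType) (E : finType) (X : fuzzy R E) (Y : {set E}) :
  mX X Y = \prod_e (if e \in Y then X e else 1 - X e).
Proof.
rewrite /mX [RHS](bigID (fun e => e \in Y)) /=.
congr (_ * _); apply: eq_big => [e|e He] //; rewrite ?in_setC ?He //.
by rewrite in_setC in He; rewrite (negbTE He).
Qed.

Lemma fPhiE (R : realFieldType) (E : finType) n (L : 'I_n -> bool)
  (X : 'I_n -> fuzzy R E) e : fPhi L X e = \prod_r fpow (X r) (L r) e.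
Proof.
rewrite /fPhi -[RHS]big_enum /=.
elim: (enum _) => [|r s IH]; rewrite ?big_nil ?big_cons //= /fcap IH //.
Qed.

Section Main.
Variables (R : realFieldType) (E : finType) (n : nat) (L : 'I_n -> bool)
  (X : 'I_n -> fuzzy R E).

Lemma prod_mX (Y : {ffun 'I_n -> {set E}}) :
  \prod_r mX (X r) (Y r) = \prod_e \prod_r fpow (X r) (e \in Y r) e.
Proof.
under eq_bigr do rewrite mXE.
rewrite exchange_big; apply: eq_bigr => e _; apply: eq_bigr => r _.
by case: (e \in Y r).
Qed.

Lemma sum_all e :
  \sum_(b : {ffun 'I_n -> bool}) \prod_r fpow (X r) (b r) e = 1.
Proof.
rewrite -(bigA_distr_bigA (fun r b => fpow (X r) b e)) /=.
by apply: big1 => r _; rewrite big_bool /= /fneg addrC subrK.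
Qed.

Lemma sum_Phi (A : {set E}) :
  \sum_(Y : {ffun 'I_n -> {set E}} | Phi L Y == A) \prod_r mX (X r) (Y r)
  = mX (fPhi L X) A.
Proof.
under eq_bigr do rewrite prod_mX.
pose h (F : {ffun E -> {ffun 'I_n -> bool}}) : {ffun 'I_n -> {set E}} :=
  [ffun r => [set e | F e r]].
pose h' (Y : {ffun 'I_n -> {set E}}) : {ffun E -> {ffun 'I_n -> bool}} :=
  [ffun e => [ffun r => e \in Y r]].
rewrite (reindex h); last first.
  exists h' => Y _.
    by apply/ffunP => e; apply/ffunP => r; rewrite !ffunE inE.
  by apply/ffunP => r; apply/setP => e; rewrite !ffunE inE !ffunE.
pose fL : {ffun 'I_n -> bool} := [ffun r => L r].
have memPhi F e : (e \in Phi L (h F)) = (F e == fL).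
  apply/bigcapP/eqP => [H|HF].
    apply/ffunP => r; rewrite ffunE; move: (H r isT); rewrite /cpow ffunE.
    by case: (L r); rewrite ?in_setC inE // => /negbTE.
  move=> r _; have : F e r = L r by rewrite HF ffunE.
  by rewrite /cpow ffunE; case: (L r) => Hr; rewrite ?in_setC inE Hr.
rewrite big_mkcond /=.
under eq_bigr => F _.
  have -> : (Phi L (h F) == A) = [forall e, (e \in A) == (F e == fL)].
    apply/eqP/forallP => [<- e|H]; first by rewrite memPhi.
    by apply/setP => e; rewrite memPhi (eqP (H e)).
  have -> : (if [forall e, (e \in A) == (F e == fL)] then
       \prod_e \prod_r fpow (X r) (e \in h F r) e else 0) =
     \prod_e (((e \in A) == (F e == fL))%:R * \prod_r fpow (X r) (F e r) e).
    rewrite big_split /=.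
    case: (boolP [forall e, _]) => [/forallP H|/forallPn [e He]].
      rewrite [X in _ = X * _]big1 ?mul1r; last by move=> e _; rewrite (eqP (H e)) eqxx.
      by apply: eq_bigr => e _; apply: eq_bigr => r _; rewrite ffunE inE.
    by rewrite (bigD1 e) //= (negbTE He) !mul0r.
  over.
rewrite -(bigA_distr_bigA (fun e (b : {ffun 'I_n -> bool}) =>
   ((e \in A) == (b == fL))%:R * \prod_r fpow (X r) (b r) e)) /=.
rewrite mXE; apply: eq_bigr => e _; rewrite fPhiE.
have PfL : \prod_r fpow (X r) (fL r) e = \prod_r fpow (X r) (L r) e.
  by apply: eq_bigr => r _; rewrite ffunE.
case: (boolP (e \in A)) => He.
  rewrite (bigD1 fL) //= eqxx mul1r [X in _ + X]big1 ?addr0 ?PfL //.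
  by move=> b /negbTE ->; rewrite mul0r.
rewrite -[X in _ = X - _](sum_all e) [X in _ = X - _](bigD1 fL) //= -PfL.
rewrite (bigD1 fL) //= eqxx mul0r add0r addrC addrK.
by apply: eq_bigr => b /negbTE ->; rewrite mul1r.
Qed.

End Main.

Theorem theorem2 (R : realFieldType) (E : finType) (n K : nat)
    (X : 'I_n -> fuzzy R E) (hX : forall r, is_fuzzy (X r))
    (l : 'I_K -> 'I_n -> bool) (j : 'I_K) (k : 'I_#|E|.+1) :
  marginal X l j k = poisson_binomial (fPhi (l j) X) k.
Proof.
rewrite /marginal /fjoint.
have -> : \sum_(i : {ffun 'I_K -> 'I_#|E|.+1} | i j == k)
     \sum_(Y : {ffun 'I_n -> {set E}} | [forall j0, #|Phi (l j0) Y| == val (i j0)])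
        \prod_(r < n) mX (X r) (Y r)
   = \sum_(Y : {ffun 'I_n -> {set E}} | #|Phi (l j) Y| == k)
        \prod_(r < n) mX (X r) (Y r).
  rewrite [RHS](partition_big
     (fun Y : {ffun 'I_n -> {set E}} => [ffun j' => inord #|Phi (l j') Y| : 'I_#|E|.+1])
     (fun i => i j == k)) /=; last first.
    move=> Y H; rewrite ffunE; apply/eqP; apply: val_inj.
    by rewrite /= inordK ?ltnS ?max_card // (eqP H).
  apply: eq_bigr => i Hi; apply: eq_bigl => Y.
  apply/forallP/andP => [H|[H1 /eqP <-] j'].
    split; first by rewrite -(eqP Hi); exact: (H j).
    apply/eqP/ffunP => j'; rewrite ffunE; apply: val_inj.
    by rewrite /= inordK ?ltnS ?max_card // (eqP (H j')).
  by rewrite ffunE /= inordK // ltnS max_card.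
rewrite (partition_big (fun Y : {ffun 'I_n -> {set E}} => Phi (l j) Y) (fun A : {set E} => #|A| == k)) /=;
  last by move=> Y.
rewrite /poisson_binomial; apply: eq_bigr => A HA; transitivity (mX (fPhi (l j) X) A); last by []. rewrite -sum_Phi; apply: eq_bigl => Y.
by case: (Phi (l j) Y =P A) => [->|]; rewrite ?andbT ?andbF.
Qed.
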